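(* With the notation below, $\hat G=\hat K_{x_0}\hat B$, i.e. every $g\in\hat G$ can be written $g=kb$ with $k\in\hat K_{x_0}$ and $b\in\hat B$.
   Context: Let $F$ be a non-archimedean local field with ring of integers $\mathfrak{o}$, uniformizer $\varpi$, and finite residue field of cardinality $q$. $X=X_{PGL_2(F)}$ is the Bruhat–Tits tree of $PGL_2(F)$: vertices are homothety classes of $\mathfrak{o}$-lattices in $F^2$, with $[L],[L']$ adjacent iff there are representatives with $\varpi L\subsetneq L'\subsetneq L$; it is $(q+1)$-regular. $d$ is the path-length distance; $\mathrm{Aut}(X)$ is the group of distance-preserving bijections of the vertex set with the topology of pointwise convergence, and $PGL_2(F)\hookrightarrow\mathrm{Aut}(X)$ via the linear action on lattices. For an edge $\eta=\{y_1,y_2\}$ and $e\ge1$, $B(\eta,e)=\{y:\min(d(y,y_1),d(y,y_2))\le e\}$, and $\hat G=\hat G^{(e)}=\{g\in\mathrm{Aut}(X):\forall\eta\ \exists g'\in PGL_2(F),\ g|_{B(\eta,e)}=g'|_{B(\eta,e)}\}$ for a fixed $e\ge1$. Ends are equivalence classes of infinite paths (agreeing after an index shift from some point on). Fix a doubly infinite path $(x_n)_{n\in\mathbb{Z}}$; let $\omega$ be the end of $(x_n)_{n\ge0}$ and $\omega'$ the end of $(x_{-n})_{n\ge0}$. Set $\hat B=\{g\in\hat G: g(\omega)=\omega\}$, $\hat K_{x_0}=\{g\in\hat G: g(x_0)=x_0\}$. *)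

(* Defs.v *)
From HB Require Import structures.
From mathcomp Require Import all_boot all_order all_algebra.
Unset Printing Implicit Defensive.
Import Order.TTheory GRing.Theory Num.Theory.
Local Open Scope ring_scope.

Section BTTree.
Variable F : fieldType.
(* normalized discrete valuation; the value at 0 is irrelevant (0 has valuation +oo) *)
Variable val : F -> int.

(* x and y are congruent modulo p^n, i.e. v(x - y) >= n (with v(0) = +oo) *)
Definition close (n : int) (x y : F) : bool := (x == y) || (n <= val (x - y)).

Definition in_o (x : F) : bool := (x == 0) || (0 <= val x).

(* F is a non-archimedean local field with normalized valuation val:
   val is a discrete valuation onto Z, F is complete for it,
   and the residue field o / p is finite. *)
Definition is_nonarch_local_field : Prop :=
  [/\ (forall x y, x != 0 -> y != 0 -> val (x * y) = val x + val y),
      (forall x y, x != 0 -> y != 0 -> x + y != 0 ->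
          (val x <= val (x + y)) || (val y <= val (x + y))),
      (exists pi : F, pi != 0 /\ val pi = 1),
      (forall a : nat -> F,
          (forall n : int, exists N : nat, forall i j, (N <= i)%N -> (N <= j)%N ->
              close n (a i) (a j)) ->
          exists l : F, forall n : int, exists N : nat, forall i, (N <= i)%N ->
              close n (a i) l)
    & (exists s : seq F, forall x, in_o x -> exists2 r, r \in s & close 1 x r)].

Definition vec := 'cV[F]_2.

Definition is_lattice (L : vec -> Prop) : Prop :=
  exists M : 'M[F]_2, M \in unitmx /\
    forall w, L w <-> exists c : vec, (forall i, in_o (c i 0)) /\ w = M *m c.

Definition scale_set (a : F) (L : vec -> Prop) : vec -> Prop :=
  fun v => exists w, L w /\ v = a *: w.

Definition mat_img (A : 'M[F]_2) (L : vec -> Prop) : vec -> Prop :=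
  fun v => exists w, L w /\ v = A *m w.

(* a vertex is a homothety class of lattices *)
Definition is_vertex (C : (vec -> Prop) -> Prop) : Prop :=
  exists L0, is_lattice L0 /\
    forall L, C L <-> exists a : F, a != 0 /\ forall v, L v <-> scale_set a L0 v.

Definition vertex := {C : (vec -> Prop) -> Prop | is_vertex C}.

Definition ssubset (A B : vec -> Prop) : Prop :=
  (forall v, A v -> B v) /\ exists v, B v /\ ~ A v.

Definition adjacent (varpi : F) (x y : vertex) : Prop :=
  exists L L', proj1_sig x L /\ proj1_sig y L' /\
    ssubset (scale_set varpi L) L' /\ ssubset L' L.

Definition walk (varpi : F) (x y : vertex) (n : nat) : Prop :=
  exists s : nat -> vertex, s 0%N = x /\ s n = y /\
    forall i, (i < n)%N -> adjacent varpi (s i) (s i.+1).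

Definition dist (varpi : F) (x y : vertex) (n : nat) : Prop :=
  walk varpi x y n /\ forall m, walk varpi x y m -> (n <= m)%N.

Definition is_aut (varpi : F) (g : vertex -> vertex) : Prop :=
  bijective g /\ forall x y n, dist varpi x y n <-> dist varpi (g x) (g y) n.

Definition pgl_act (A : 'M[F]_2) (x y : vertex) : Prop :=
  exists L, proj1_sig x L /\ proj1_sig y (mat_img A L).

Definition in_ball (varpi : F) (y1 y2 : vertex) (e : nat) (y : vertex) : Prop :=
  exists n, (n <= e)%N /\ (dist varpi y y1 n \/ dist varpi y y2 n).

Definition in_Ghat (varpi : F) (e : nat) (g : vertex -> vertex) : Prop :=
  is_aut varpi g /\
  forall y1 y2, adjacent varpi y1 y2 ->
    exists A : 'M[F]_2, A \in unitmx /\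
      forall y, in_ball varpi y1 y2 e y -> pgl_act A y (g y).

Definition biinf_path (varpi : F) (x : int -> vertex) : Prop :=
  forall n : int, adjacent varpi (x n) (x (n + 1)) /\ x (n - 1) <> x (n + 1).

(* g fixes the end omega of the ray (x_n)_{n >= 0}: the rays (g x_n) and (x_n)
   agree after an index shift *)
Definition fixes_end (x : int -> vertex) (g : vertex -> vertex) : Prop :=
  exists a b : nat, forall n : nat, g (x (n + a)%N%:Z) = x (n + b)%N%:Z.

End BTTree.

(* Main.v *)
Require Import Defs.
From HB Require Import structures.
From mathcomp Require Import all_boot all_order all_algebra.
From mathcomp Require Import zify ring.
From Stdlib Require Import ProofIrrelevance FunctionalExtensionality PropExtensionality Classical ClassicalEpsilon.
Import Order.TTheory GRing.Theory Num.Theory.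
Local Open Scope ring_scope.

Section Val.
Variable F : fieldType.
Variable val : F -> int.
Hypothesis hmul : forall x y : F, x != 0 -> y != 0 -> val (x * y) = val x + val y.
Hypothesis hult : forall x y : F, x != 0 -> y != 0 -> x + y != 0 ->
          (val x <= val (x + y)) || (val y <= val (x + y)).
Local Notation o := (in_o F val).

Lemma val1 : val 1 = 0.
Proof. have h1 : (1:F) != 0 by rewrite oner_eq0. have := hmul _ _ h1 h1. rewrite mulr1. lia. Qed.

Lemma valV x : x != 0 -> val x^-1 = - val x.
Proof. move=> hx. have := hmul _ _ hx (invr_neq0 hx). rewrite mulfV // val1. lia. Qed.

Lemma valN1 : val (-1) = 0.
Proof.
have h : (-1 : F) != 0 by rewrite oppr_eq0 oner_neq0.
have := hmul _ _ h h. rewrite mulrNN mulr1 val1. lia.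
Qed.

Lemma valN x : x != 0 -> val (- x) = val x.
Proof.
move=> hx. have h : (-1 : F) != 0 by rewrite oppr_eq0 oner_neq0.
rewrite -mulN1r hmul // valN1. lia.
Qed.

Lemma valD x y : x != 0 -> y != 0 -> x + y != 0 ->
  Num.min (val x) (val y) <= val (x + y).
Proof.
move=> hx hy hxy; have := hult _ _ hx hy hxy; case/orP => h; rewrite ge_min h ?orbT //.
Qed.

Lemma in_o0 : o 0. Proof. by rewrite /in_o eqxx. Qed.
Lemma in_o1 : o 1. Proof. by rewrite /in_o val1 lexx orbT. Qed.

Lemma in_oE x : x != 0 -> o x = (0 <= val x).
Proof. by move=> hx; rewrite /in_o (negbTE hx). Qed.

Lemma in_oM x y : o x -> o y -> o (x * y).
Proof.
rewrite /in_o. case: (eqVneq x 0) => [->|hx]; first by rewrite mul0r eqxx.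
case: (eqVneq y 0) => [->|hy]; first by rewrite mulr0 eqxx.
rewrite /= hmul // mulf_eq0 (negbTE hx) (negbTE hy) /=. lia.
Qed.

Lemma in_oN x : o x -> o (- x).
Proof.
rewrite /in_o. case: (eqVneq x 0) => [->|hx]; first by rewrite oppr0 eqxx.
by rewrite /= valN // oppr_eq0 (negbTE hx).
Qed.

Lemma in_oD x y : o x -> o y -> o (x + y).
Proof.
case: (eqVneq x 0) => [->|hx]; first by rewrite add0r.
case: (eqVneq y 0) => [->|hy]; first by rewrite addr0.
case: (eqVneq (x + y) 0) => [->|hxy]; first by rewrite in_o0.
rewrite !in_oE // => h1 h2. have := valD _ _ hx hy hxy. rewrite ge_min. case/orP => h; [exact: le_trans h1 h | exact: le_trans h2 h].
Qed.

Lemma in_oB x y : o x -> o y -> o (x - y).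
Proof. by move=> h1 h2; apply: in_oD => //; apply: in_oN. Qed.

Lemma in_o_div x y : y != 0 -> (x == 0) || (val y <= val x) -> o (x / y).
Proof.
move=> hy; case: (eqVneq x 0) => [->|hx] /=; first by rewrite mul0r in_o0.
move=> h; rewrite in_oE ?mulf_neq0 ?invr_eq0 // hmul ?invr_eq0 // valV //. lia.
Qed.

Lemma val_o x : o x -> x != 0 -> 0 <= val x.
Proof. by move=> h hx; rewrite -in_oE. Qed.

Lemma in_oV x : x != 0 -> val x = 0 -> o x^-1.
Proof. move=> hx h; rewrite -[x^-1]mul1r; apply: in_o_div => //. rewrite h val1 lexx orbT //. Qed.


Definition mx2 (a b c d : F) : 'M[F]_2 :=
  \matrix_(i < 2, j < 2) if i == 0 then (if j == 0 then a else b) else (if j == 0 then c else d).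

Lemma mx2_eta (M : 'M[F]_2) : M = mx2 (M 0 0) (M 0 1) (M 1 0) (M 1 1).
Proof. apply/matrixP => i j; rewrite !mxE; case: i => [[|[|i]] Hi] //; case: j => [[|[|j]] Hj] //=;
  by congr (M _ _); apply/val_inj. Qed.

Lemma mx2_mul a b c d e f g h :
  mx2 a b c d *m mx2 e f g h = mx2 (a*e+b*g) (a*f+b*h) (c*e+d*g) (c*f+d*h).
Proof. apply/matrixP => i j; rewrite !mxE !big_ord_recr big_ord0 !mxE /=;
  case: i => [[|[|i]] Hi] //; case: j => [[|[|j]] Hj] //=; rewrite ?add0r //. Qed.

Lemma det_mx2 a b c d : \det (mx2 a b c d) = a * d - b * c.
Proof.
rewrite (expand_det_row _ 0) !big_ord_recr big_ord0 /cofactor /= !det_mx11 !mxE /= add0r expr0 expr1 mul1r.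
by rewrite mulN1r mulrN.
Qed.

Lemma mx2_1 : (1%:M : 'M[F]_2) = mx2 1 0 0 1.
Proof. apply/matrixP => i j; rewrite !mxE; case: i => [[|[|i]] Hi] //; case: j => [[|[|j]] Hj] //=. Qed.

Lemma mx2_scale k a b c d : k *: mx2 a b c d = mx2 (k * a) (k * b) (k * c) (k * d).
Proof. apply/matrixP => i j; rewrite !mxE; case: i => [[|[|i]] Hi] //; case: j => [[|[|j]] Hj] //=. Qed.

Lemma mx2_inj a b c d a' b' c' d' : mx2 a b c d = mx2 a' b' c' d' ->
  [/\ a = a', b = b', c = c' & d = d'].
Proof.
move=> h; have E i j := congr1 (fun M : 'M[F]_2 => M i j) h.
move: (E 0 0) (E 0 1) (E 1 0) (E 1 1); rewrite !mxE /=. done.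
Qed.

Lemma mx2_unit a b c d : (mx2 a b c d \in unitmx) = (a * d - b * c != 0).
Proof. by rewrite unitmxE det_mx2 unitfE. Qed.

Definition eqL (L L' : vec F -> Prop) := forall v, L v <-> L' v.
Definition ovec (c : vec F) := forall i, o (c i 0).
Definition LatM (M : 'M[F]_2) : vec F -> Prop := fun v => exists c, ovec c /\ v = M *m c.
Definition omx (X : 'M[F]_2) := forall i j, o (X i j).
Definition GL2o (U : 'M[F]_2) := omx U /\ exists V, omx V /\ U *m V = 1%:M /\ V *m U = 1%:M.

Lemma omx_mx2 a b c d : o a -> o b -> o c -> o d -> omx (mx2 a b c d).
Proof. move=> ha hb hc hd i j; rewrite !mxE; case: i => [[|[|i]] Hi] //; case: j => [[|[|j]] Hj] //=. Qed.

Lemma omx_mx2E a b c d : omx (mx2 a b c d) -> [/\ o a, o b, o c & o d].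
Proof. by move=> h; move: (h 0 0) (h 0 1) (h 1 0) (h 1 1); rewrite !mxE. Qed.

Lemma sum_o n (f : 'I_n -> F) : (forall i, o (f i)) -> o (\sum_i f i).
Proof. move=> h; apply: (big_ind (fun x => o x)) => //; [exact: in_o0 | exact: in_oD]. Qed.

Lemma omx_mul X Y : omx X -> omx Y -> omx (X *m Y).
Proof. move=> hX hY i j; rewrite mxE; apply: sum_o => k; exact: in_oM. Qed.

Lemma ovec_mul X c : omx X -> ovec c -> ovec (X *m c).
Proof. move=> hX hc i; rewrite mxE; apply: sum_o => k; exact: in_oM. Qed.

Lemma omx1 : omx 1%:M.
Proof. move=> i j; rewrite mxE; case: (i == j); [exact: in_o1 | exact: in_o0]. Qed.

Lemma GL2o_omx U : GL2o U -> omx U. Proof. by case. Qed.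

Lemma GL2o_mul U V : GL2o U -> GL2o V -> GL2o (U *m V).
Proof.
move=> [hU [U' [hU' [e1 e2]]]] [hV [V' [hV' [e3 e4]]]]; split; first exact: omx_mul.
exists (V' *m U'); split; first exact: omx_mul.
split; first by rewrite mulmxA -(mulmxA U) e3 mulmx1 e1.
by rewrite mulmxA -(mulmxA V') e2 mulmx1 e4.
Qed.

Lemma GL2o_inv U : GL2o U -> exists V, GL2o V /\ U *m V = 1%:M /\ V *m U = 1%:M.
Proof.
move=> [hU [V [hV [e1 e2]]]]; exists V; split => //; split => //; exists U; split => //.
Qed.

Lemma GL2o_unit U : GL2o U -> U \in unitmx.
Proof.
move=> [_ [V [_ [e1 _]]]]; rewrite unitmxE unitfE.
have := congr1 determinant e1; rewrite det_mulmx det1 => h.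
apply/eqP => h0; move: h; rewrite h0 mul0r => /eqP; rewrite eq_sym oner_eq0 //.
Qed.

Lemma LatM_sub M X : omx X -> forall v, LatM (M *m X) v -> LatM M v.
Proof. move=> hX v [c [hc ->]]; exists (X *m c); split; [exact: ovec_mul | by rewrite mulmxA]. Qed.

Lemma LatM_GL M U : GL2o U -> eqL (LatM (M *m U)) (LatM M).
Proof.
move=> [hU [V [hV [e1 e2]]]] v; split; first exact: LatM_sub.
move=> h; apply: (@LatM_sub _ V hV); by rewrite -mulmxA e1 mulmx1.
Qed.

Lemma LatM_scale a M : eqL (LatM (a *: M)) (scale_set F a (LatM M)).
Proof.
move=> v; split.
  move=> [c [hc ->]]; exists (M *m c); split; [by exists c | by rewrite scalemxAl].
move=> [u [[c [hc ->]] ->]]; exists c; split => //; by rewrite scalemxAl.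
Qed.

Lemma ovec_delta (j : 'I_2) : ovec (delta_mx j 0).
Proof. move=> i; rewrite mxE; case: (_ && _); [exact: in_o1 | exact: in_o0]. Qed.

Lemma LatM_sub_inv {M N} : M \in unitmx -> (forall v, LatM N v -> LatM M v) ->
  omx (invmx M *m N).
Proof.
move=> hM h i j.
case: (h (N *m delta_mx j 0)) => [|c [hc e]]; first by exists (delta_mx j 0); split => //; exact: ovec_delta.
have e2 : (invmx M *m N) i j = col j (invmx M *m N) i 0 by rewrite colEsub; unfold mxsub; rewrite mxE.
rewrite e2.
by rewrite colE -mulmxA e mulKmx.
Qed.


Lemma GL2o_mx2 a b c d : o a -> o b -> o c -> o d -> a * d - b * c != 0 ->
  val (a * d - b * c) = 0 -> GL2o (mx2 a b c d).
Proof.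
move=> ha hb hc hd hD hv; split; first exact: omx_mx2.
set D := a * d - b * c.
have hD' : o D^-1 by apply: in_oV.
exists (mx2 (d * D^-1) (- b * D^-1) (- c * D^-1) (a * D^-1)); split.
  by apply: omx_mx2; apply: in_oM => //; apply: in_oN.
rewrite !mx2_mul mx2_1; split; congr mx2; rewrite /D; field; done.
Qed.

Lemma GL2o_det {U} : omx U -> \det U != 0 -> val (\det U) = 0 -> GL2o U.
Proof.
move=> hU; have := hU; rewrite (mx2_eta U) det_mx2; case/omx_mx2E => *.
exact: GL2o_mx2.
Qed.


Variable w : F.
Hypothesis hw0 : w != 0.
Hypothesis hw1 : val w = 1.

Lemma val_o1 {x} : o x -> x != 0 -> val x != 0 -> 1 <= val x.
Proof. move=> h hx; have := val_o _ h hx; lia. Qed.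

Lemma nf a b c d : o a -> o b -> o c -> o d -> a * d - b * c != 0 ->
  val (a * d - b * c) = 1 ->
  exists W, GL2o W /\ ((exists c', o c' /\ mx2 a b c d *m W = mx2 1 0 c' w)
                       \/ mx2 a b c d *m W = mx2 w 0 0 1).
Proof.
move=> ha hb hc hd hD hv; set D := a * d - b * c in hD hv.
have hq0 : w / D != 0 by rewrite mulf_neq0 ?invr_eq0.
have hqv : val (w / D) = 0 by rewrite hmul ?invr_eq0 // valV // hw1 hv.
have hq : o (w / D) by rewrite in_oE // hqv.
have oq x : o x -> o (x * (w / D)) by move=> hx; apply: in_oM.
have [hA|hA] := boolP ((a != 0) && (val a == 0)).
  case/andP: hA => an0 /eqP va0.
  exists (mx2 a^-1 (b * (w / D) * -1) 0 (a * (w / D))); split.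
    have e : a^-1 * (a * (w / D)) - b * (w / D) * -1 * 0 = w / D by field; rewrite ?hD ?an0.
    apply: GL2o_mx2; rewrite ?e //.
    + exact: in_oV.
    + by apply: in_oM; [apply: oq | apply: in_oN; apply: in_o1].
    + exact: in_o0.
    + exact: oq.
  left; exists (c / a); split; first by apply: in_oM => //; apply: in_oV.
  by rewrite mx2_mul; congr mx2; rewrite /D; field; rewrite ?an0.
have [hB|hB] := boolP ((b != 0) && (val b == 0)).
  case/andP: hB => bn0 /eqP vb0.
  exists (mx2 0 (b * (w / D) * -1) b^-1 (a * (w / D))); split.
    have e : 0 * (a * (w / D)) - b * (w / D) * -1 * b^-1 = w / D by field; rewrite ?hD ?bn0.
    apply: GL2o_mx2; rewrite ?e //.
    + exact: in_o0.
    + by apply: in_oM; [apply: oq | apply: in_oN; apply: in_o1].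
    + exact: in_oV.
    + exact: oq.
  left; exists (d / b); split; first by apply: in_oM => //; apply: in_oV.
  by rewrite mx2_mul; congr mx2; rewrite /D; field; rewrite ?bn0.
have odiv x : o x -> ~~ ((x != 0) && (val x == 0)) -> o (x / D).
  move=> hx hx'; apply: in_o_div => //; rewrite hv.
  case: (eqVneq x 0) => //= xn0; move: hx'; rewrite xn0 /= => hx0.
  exact: val_o1.
exists (mx2 (d * (w / D)) (- b / D) (c * (w / D) * -1) (a / D)); split.
  have e : d * (w / D) * (a / D) - - b / D * (c * (w / D) * -1) = w / D.
    by rewrite /D; field; rewrite ?hD.
  apply: GL2o_mx2; rewrite ?e //.
  + exact: oq.
  + by rewrite mulNr; apply: in_oN; apply: odiv.
  + by apply: in_oM; [apply: oq | apply: in_oN; apply: in_o1].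
  + exact: odiv.
right; by rewrite mx2_mul; congr mx2; rewrite /D; field; rewrite ?hD.
Qed.


Local Notation V := (vertex F val).
Definition cls (x : V) := proj1_sig x.

Lemma eqL_refl L : eqL L L. Proof. by []. Qed.
Lemma eqL_sym {L L'} : eqL L L' -> eqL L' L. Proof. by move=> h v; split => /h. Qed.
Lemma eqL_trans {L1 L2 L3} : eqL L1 L2 -> eqL L2 L3 -> eqL L1 L3.
Proof. by move=> h1 h2 v; split => [/h1/h2|/h2/h1]. Qed.

Lemma scale_eqL a {L L'} : eqL L L' -> eqL (scale_set F a L) (scale_set F a L').
Proof. by move=> h v; split => -[u [/h hu ->]]; exists u. Qed.

Lemma scale_scale a b L : eqL (scale_set F a (scale_set F b L)) (scale_set F (a * b) L).
Proof.
move=> v; split.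
  by move=> [u [[u' [hu' ->]] ->]]; exists u'; rewrite scalerA.
by move=> [u [hu ->]]; exists (b *: u); split; [exists u | rewrite scalerA].
Qed.

Lemma scale1 L : eqL (scale_set F 1 L) L.
Proof. by move=> v; split => [[u [hu ->]]|hv]; [rewrite scale1r | exists v; rewrite scale1r]. Qed.

Lemma vclass {x : V} {L} : cls x L ->
  forall L', cls x L' <-> exists a, a != 0 /\ eqL L' (scale_set F a L).
Proof.
case: x => C [L0 [hl hC]] /=; rewrite /cls /= => /hC [a0 [ha0 e0]] L'; split.
  move=> /hC [b [hb eb]]; exists (b / a0); split; first by rewrite mulf_neq0 ?invr_eq0.
  apply: (eqL_trans eb); apply: eqL_sym.
  apply: eqL_trans (scale_eqL _ e0) _; apply: eqL_trans (scale_scale _ _ _) _.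
  by rewrite mulfVK.
move=> [c [hc ec]]; apply/hC; exists (c * a0); split; first by rewrite mulf_neq0.
apply: (eqL_trans ec); apply: eqL_trans (scale_eqL _ e0) _; exact: scale_scale.
Qed.

Lemma v_eq {x y : V} {L} : cls x L -> cls y L -> x = y.
Proof.
move=> hx hy.
have E : cls x = cls y.
  apply: functional_extensionality => L'; apply: propositional_extensionality.
  by rewrite (vclass hx) (vclass hy).
move: E; case: x {hx} => C pC; case: y {hy} => C' pC' /= E; subst C'.
by rewrite (proof_irrelevance _ pC pC').
Qed.

Lemma v_closed {x : V} {L} L' : cls x L -> eqL L' L -> cls x L'.
Proof.
move=> hx e; apply/(vclass hx); exists 1; split; first exact: oner_neq0.
exact: eqL_trans e (eqL_sym (scale1 _)).
Qed.

Lemma v_rep (x : V) : exists M, M \in unitmx /\ cls x (LatM M).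
Proof.
case: x => C [L0 [[M [hM hL]] hC]]; exists M; split => //; rewrite /cls /=.
apply/hC; exists 1; split; first exact: oner_neq0.
move=> v; split.
  by move=> h; exists v; split; [apply/hL | rewrite scale1r].
by move=> [u [/hL hu ->]]; rewrite scale1r.
Qed.

Definition inV (x : V) M := cls x (LatM M).

Lemma inV_hom {x : V} {M} a U : inV x M -> a != 0 -> GL2o U -> inV x (a *: (M *m U)).
Proof.
move=> hx ha hU; apply/(vclass hx); exists a; split => //.
apply: eqL_trans (LatM_scale _ _) _; apply: scale_eqL; exact: LatM_GL.
Qed.

Lemma v_eqM {x y : V} {M} : inV x M -> inV y M -> x = y.
Proof. exact: v_eq. Qed.

Lemma cls_LatM {x : V} {M L} : inV x M -> cls x L -> exists a, a != 0 /\ eqL L (LatM (a *: M)).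
Proof.
move=> hx /(vclass hx) [a [ha e]]; exists a; split => //.
exact: eqL_trans e (eqL_sym (LatM_scale _ _)).
Qed.


Lemma mat_img_eqL A {L L'} : eqL L L' -> eqL (mat_img F A L) (mat_img F A L').
Proof. by move=> h v; split => -[u [/h hu ->]]; exists u. Qed.

Lemma mat_img_scale A a L : eqL (mat_img F A (scale_set F a L)) (scale_set F a (mat_img F A L)).
Proof.
move=> v; split.
  by move=> [u [[u' [hu' ->]] ->]]; exists (A *m u'); split; [exists u' | rewrite scalemxAr].
by move=> [u [[u' [hu' ->]] ->]]; exists (a *: u'); split; [exists u' | rewrite scalemxAr].
Qed.

Lemma mat_img_mul A B L : eqL (mat_img F A (mat_img F B L)) (mat_img F (A *m B) L).
Proof.
move=> v; split.
  by move=> [u [[u' [hu' ->]] ->]]; exists u'; rewrite mulmxA.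
by move=> [u [hu ->]]; exists (B *m u); split; [exists u | rewrite mulmxA].
Qed.

Lemma mat_img_1 L : eqL (mat_img F 1%:M L) L.
Proof. by move=> v; split => [[u [hu ->]]|hv]; [rewrite mul1mx | exists v; rewrite mul1mx]. Qed.

Lemma mat_img_LatM A M : eqL (mat_img F A (LatM M)) (LatM (A *m M)).
Proof.
move=> v; split.
  by move=> [u [[c [hc ->]] ->]]; exists c; split => //; rewrite mulmxA.
by move=> [c [hc ->]]; exists (M *m c); split; [exists c | rewrite mulmxA].
Qed.

Definition act_pred A (x : V) : (vec F -> Prop) -> Prop :=
  if A \in unitmx then fun L => exists L1, cls x L1 /\ eqL L (mat_img F A L1) else cls x.

Lemma act_is_vertex A x : is_vertex F val (act_pred A x).
Proof.
rewrite /act_pred; case: ifP => hA; last exact: (proj2_sig x).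
case: x => C [L0 [[M [hM hL]] hC]] /=.
exists (mat_img F A L0); split.
  exists (A *m M); split; first by rewrite unitmx_mul hA hM.
  move=> v; split.
    by move=> [u [/hL [c [hc ->]] ->]]; exists c; split => //; rewrite mulmxA.
  by move=> [c [hc ->]]; exists (M *m c); split; [apply/hL; exists c | rewrite mulmxA].
move=> L; split.
  move=> [L1 [/hC [a [ha e]] e1]]; exists a; split => //.
  apply: eqL_trans e1 _; apply: eqL_trans (mat_img_eqL _ e) _; exact: mat_img_scale.
move=> [a [ha e]]; exists (scale_set F a L0); split.
  by apply/hC; exists a; split.
apply: eqL_trans e _; exact: eqL_sym (mat_img_scale _ _ _).
Qed.

Definition act A (x : V) : V := exist _ (act_pred A x) (act_is_vertex A x).

Lemma act_in {A x L} : A \in unitmx -> cls x L -> cls (act A x) (mat_img F A L).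
Proof. by move=> hA hx; rewrite /act /cls /= /act_pred hA; exists L. Qed.

Lemma act_inV {A x M} : A \in unitmx -> inV x M -> inV (act A x) (A *m M).
Proof. move=> hA hx; apply: v_closed (act_in hA hx) _; exact: eqL_sym (mat_img_LatM _ _). Qed.

Lemma act_mul A B x : A \in unitmx -> B \in unitmx -> act A (act B x) = act (A *m B) x.
Proof.
move=> hA hB; have [M [hM hx]] := v_rep x.
have h1 := act_in hA (act_in hB hx).
have hAB : A *m B \in unitmx by rewrite unitmx_mul hA hB.
exact: v_eq h1 (v_closed _ (act_in hAB hx) (mat_img_mul _ _ _)).
Qed.

Lemma act_1 x : act 1%:M x = x.
Proof.
have [M [hM hx]] := v_rep x.
exact: v_eq (act_in (unitmx1 _ _) hx) (v_closed _ hx (mat_img_1 _)).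
Qed.

Lemma act_invK A x : A \in unitmx -> act (invmx A) (act A x) = x.
Proof. by move=> hA; rewrite act_mul ?unitmx_inv // mulVmx // act_1. Qed.

Lemma act_Kinv A x : A \in unitmx -> act A (act (invmx A) x) = x.
Proof. by move=> hA; rewrite act_mul ?unitmx_inv // mulmxV // act_1. Qed.

Lemma pgl_act_act A x : A \in unitmx -> pgl_act F val A x (act A x).
Proof. move=> hA; have [M [hM hx]] := v_rep x; exists (LatM M); split => //; exact: act_in. Qed.

Lemma pgl_act_eq A x z : A \in unitmx -> pgl_act F val A x z -> z = act A x.
Proof. move=> hA [L [hx hz]]; exact: v_eq hz (act_in hA hx). Qed.


Lemma ssubset_eqL {L1 L1' L2} : eqL L1 L1' -> ssubset F L1 L2 -> ssubset F L1' L2.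
Proof.
move=> e [h1 [v [h2 h3]]]; split; first by move=> u /e /h1.
by exists v; split => // /e.
Qed.

Lemma ssubset_img {A L1 L2} : A \in unitmx -> ssubset F L1 L2 ->
  ssubset F (mat_img F A L1) (mat_img F A L2).
Proof.
move=> hA [h1 [v [h2 h3]]]; split; first by move=> u [u' [/h1 hu ->]]; exists u'.
exists (A *m v); split; first by exists v.
move=> [u [hu e]]; apply: h3.
have -> : v = u by move/(congr1 (mulmx (invmx A))): e; rewrite !mulKmx.
done.
Qed.

Lemma act_adj {A x y} : A \in unitmx -> adjacent F val w x y -> adjacent F val w (act A x) (act A y).
Proof.
move=> hA [L [L' [hx [hy [s1 s2]]]]].
exists (mat_img F A L), (mat_img F A L'); split; first exact: act_in.
split; first exact: act_in.
split; last exact: ssubset_img.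
exact: ssubset_eqL (mat_img_scale _ _ _) (ssubset_img hA s1).
Qed.

Lemma act_walk {A x y n} : A \in unitmx -> walk F val w x y n -> walk F val w (act A x) (act A y) n.
Proof.
move=> hA [s [s0 [sn hs]]]; exists (fun i => act A (s i)); split; first by rewrite s0.
split; first by rewrite sn.
by move=> i hi; apply: act_adj => //; apply: hs.
Qed.

Lemma act_dist {A x y n} : A \in unitmx ->
  dist F val w x y n <-> dist F val w (act A x) (act A y) n.
Proof.
move=> hA; have hA' : invmx A \in unitmx by rewrite unitmx_inv.
split.
  move=> [hw hm]; split; first exact: act_walk.
  by move=> m /(act_walk hA') ; rewrite !act_invK //; apply: hm.
move=> [hw hm]; split.
  by move: (act_walk hA' hw); rewrite !act_invK.
by move=> m /(act_walk hA); apply: hm.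
Qed.

Lemma act_ball A y1 y2 e y : A \in unitmx -> in_ball F val w y1 y2 e y ->
  in_ball F val w (act A y1) (act A y2) e (act A y).
Proof.
move=> hA [n [hn hd]]; exists n; split => //.
by case: hd => h; [left | right]; exact: (proj1 (act_dist hA) h).
Qed.

Lemma act_aut A : A \in unitmx -> is_aut F val w (act A).
Proof.
move=> hA; split.
  exists (act (invmx A)) => x; [exact: act_invK | exact: act_Kinv].
move=> x y n; exact: act_dist.
Qed.

Lemma act_Ghat e A : A \in unitmx -> in_Ghat F val w e (act A).
Proof.
move=> hA; split; first exact: act_aut.
move=> y1 y2 _; exists A; split => // y _; exact: pgl_act_act.
Qed.


Lemma omx_det {X} : omx X -> o (\det X).
Proof.
move=> hX; rewrite (mx2_eta X) det_mx2.
by apply: in_oB; apply: in_oM; apply: hX.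
Qed.

Lemma GL2o1 : GL2o 1%:M.
Proof. split; first exact: omx1. by exists 1%:M; rewrite mulmx1; split => //; exact: omx1. Qed.

Lemma unitZ a (M : 'M[F]_2) : a != 0 -> M \in unitmx -> a *: M \in unitmx.
Proof. by move=> ha hM; rewrite unitmxZ // unitfE. Qed.

Lemma inV_unscale {x : V} {M} a : a != 0 -> inV x (a *: M) -> inV x M.
Proof.
move=> ha h; have := inV_hom (a^-1) 1%:M h (invr_neq0 ha) GL2o1.
by rewrite mulmx1 scalerA mulVf // scale1r.
Qed.

Lemma adj_class x y M : M \in unitmx -> inV x M -> adjacent F val w x y ->
  exists Y, [/\ omx Y, \det Y != 0, val (\det Y) = 1 & inV y (M *m Y)].
Proof.
move=> hM hxM [L [L' [hx [hy [s1 s2]]]]].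
have [a [ha eL]] := cls_LatM hxM hx.
have [N [hN hyN]] := v_rep y.
have [b [hb eL']] := cls_LatM hyN hy.
set M' := a *: M in eL; set N' := b *: N in eL'.
have hM' : M' \in unitmx by apply: unitZ.
have hN' : N' \in unitmx by apply: unitZ.
case: s2 => s2a [v2 [v2L v2L']].
case: s1 => s1a [v1 [v1L' v1L]].
have hY : omx (invmx M' *m N').
  apply: LatM_sub_inv => // u /eL' /s2a /eL //.
have hZ : omx (invmx N' *m (w *: M')).
  apply: LatM_sub_inv => // u hu; apply/eL'; apply: s1a.
  have [c [hc ->]] := hu; exists (M' *m c); split; last by rewrite scalemxAl.
  by apply/eL; exists c.
set Y := invmx M' *m N' in hY; set Z := invmx N' *m (w *: M') in hZ.
have eYZ : Y *m Z = w *: 1%:M.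
  rewrite /Y /Z mulmxA -(mulmxA _ N') mulmxV // mulmx1 -scalemxAr mulVmx //.
have eN' : N' = M' *m Y by rewrite /Y mulmxA mulmxV // mul1mx.
have eM' : w *: M' = N' *m Z by rewrite /Z mulmxA mulmxV // mul1mx.
have dYZ : \det Y * \det Z = w ^+ 2 by rewrite -det_mulmx eYZ detZ det1 mulr1.
have w2 : w ^+ 2 != 0 by rewrite expf_neq0.
have dY0 : \det Y != 0 by apply: contraNneq w2 => h; rewrite -dYZ h mul0r.
have dZ0 : \det Z != 0 by apply: contraNneq w2 => h; rewrite -dYZ h mulr0.
have vYZ : val (\det Y) + val (\det Z) = 2.
  by rewrite -hmul // dYZ expr2 hmul // hw1.
have vY : val (\det Y) != 0.
  apply/eqP => vY0; have gY := GL2o_det hY dY0 vY0.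
  apply: v2L'; apply/eL'; rewrite eN'; have [_ hh] := LatM_GL M' Y gY v2; apply: hh; exact/eL.
have vZ : val (\det Z) != 0.
  apply/eqP => vZ0; have gZ := GL2o_det hZ dZ0 vZ0.
  apply: v1L; have := proj2 (LatM_GL N' Z gZ v1) (proj1 (eL' v1) v1L'); rewrite -eM' => -[c [hc ->]].
  exists (M' *m c); split; last by rewrite scalemxAl.
  by apply/eL; exists c.
have := val_o1 (omx_det hY) dY0 vY; have := val_o1 (omx_det hZ) dZ0 vZ => h1 h2.
have h1' : 1 <= val (\det Z) := h1. have h2' : 1 <= val (\det Y) := h2.
have vY1 : val (\det Y) = 1 by lia.
exists Y; split => //.
apply: (inV_unscale a ha); rewrite scalemxAl -/M' -eN'.
apply: v_closed hy _; exact: eqL_sym eL'.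
Qed.


Definition D (n : nat) := mx2 1 0 0 (w ^+ n).
Definition Lmx (t : F) := mx2 1 0 t 1.

Lemma LD t m : D m *m Lmx t = Lmx (w ^+ m * t) *m D m.
Proof. by rewrite /D /Lmx !mx2_mul; congr mx2; ring. Qed.

Lemma LL s t : Lmx s *m Lmx t = Lmx (s + t).
Proof. by rewrite /Lmx !mx2_mul; congr mx2; ring. Qed.

Lemma Dcase1 n c : D n *m mx2 1 0 c w = Lmx (w ^+ n * c) *m D n.+1.
Proof. by rewrite /D /Lmx !mx2_mul exprS; congr mx2; ring. Qed.

Lemma Dcase2 n : D n.+1 *m mx2 w 0 0 1 = w *: D n.
Proof. by rewrite /D !mx2_mul mx2_scale exprS; congr mx2; ring. Qed.

Lemma D0 : D 0 = 1%:M.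
Proof. by rewrite /D mx2_1. Qed.

Lemma D_unit n : D n \in unitmx.
Proof. by rewrite /D mx2_unit mulr0 subr0 mul1r expf_neq0. Qed.

Lemma L_unit t : Lmx t \in unitmx.
Proof. by rewrite /Lmx mx2_unit mulr1 mul0r subr0 oner_neq0. Qed.

Lemma GL2o_L t : o t -> GL2o (Lmx t).
Proof.
move=> ht; apply: GL2o_mx2; rewrite ?mulr1 ?mul0r ?subr0 ?val1 ?oner_neq0 //;
  try exact: in_o1; exact: in_o0.
Qed.

Lemma inV_GL {x : V} {M} U : inV x M -> GL2o U -> inV x (M *m U).
Proof. move=> h hU; have := inV_hom 1 U h (oner_neq0 _) hU; by rewrite scale1r. Qed.


Lemma in_ow : o w.
Proof. by rewrite in_oE // hw1. Qed.

Lemma in_o_exp k : o (w ^+ k).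
Proof. elim: k => [|k IH]; [exact: in_o1 | rewrite exprS; exact: in_oM in_ow IH]. Qed.

Variable x : int -> V.
Hypothesis hx : biinf_path F val w x.

Lemma adjx (n : nat) : adjacent F val w (x n) (x n.+1).
Proof. have := (hx n).1; by rewrite -addn1 PoszD. Qed.

Lemma nbt (n : nat) : x n <> x n.+2.
Proof.
have := (hx n.+1).2.
have -> : (n.+1%:Z - 1) = n by rewrite -addn1 PoszD addrK.
by rewrite -[(n.+1 : int) + 1]PoszD addn1.
Qed.

Definition Hs (n : nat) (s : F) (R : 'M[F]_2) :=
  forall m, (m <= n)%N -> inV (x m) (R *m (Lmx s *m D m)).

Lemma step R n s : R \in unitmx -> (1 <= n)%N -> Hs n s R ->
  exists c, o c /\ Hs n.+1 (s + w ^+ n * c) R.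
Proof.
move=> hR hn1 H.
have hn := H n (leqnn n).
have hM : R *m (Lmx s *m D n) \in unitmx by rewrite !unitmx_mul hR L_unit D_unit.
have [Y [hY dY vY hyY]] := adj_class _ _ _ hM hn (adjx n).
have := hY; rewrite (mx2_eta Y) => /omx_mx2E [ha hb hc hd].
rewrite (mx2_eta Y) det_mx2 in dY vY.
have [W [hW [[c [hc0 e]]|e]]] := nf _ _ _ _ ha hb hc hd dY vY; rewrite -(mx2_eta Y) in e;
  have := inV_GL W hyY hW; rewrite -!mulmxA e.
- rewrite Dcase1 (mulmxA (Lmx s)) LL => hnew.
  exists c; split => // m; rewrite leq_eqVlt; case/orP => [/eqP -> //|hm].
  have hm' : (m <= n)%N by rewrite -ltnS.
  have := inV_GL (Lmx (w ^+ (n - m) * c)) (H m hm') (GL2o_L _ (in_oM _ _ (in_o_exp _) hc0)).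
  by rewrite -!mulmxA LD (mulmxA (Lmx s)) LL mulrA -exprD subnKC.
- case: n hn1 H hn hM hyY => [//|n'] _ H hn hM hyY.
  rewrite Dcase2 -!scalemxAr => /(inV_unscale w hw0) h.
  have E := v_eqM (H n' (leqnSn _)) h; exfalso; exact: (nbt _ E).
Qed.


Lemma Lmx0 : Lmx 0 = 1%:M.
Proof. by rewrite /Lmx mx2_1. Qed.

Definition Smx := mx2 0 1 1 0.

Lemma GL2o_S : GL2o Smx.
Proof.
apply: GL2o_mx2; rewrite ?mulr0 ?mulr1 ?sub0r; try exact: in_o1; try exact: in_o0.
  by rewrite oppr_eq0 oner_neq0.
by rewrite valN1.
Qed.

Lemma base : exists R, R \in unitmx /\ Hs 1 0 R.
Proof.
have [M [hM hx0]] := v_rep (x 0%N).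
have [Y [hY dY vY hyY]] := adj_class _ _ _ hM hx0 (adjx 0).
have := hY; rewrite (mx2_eta Y) => /omx_mx2E [ha hb hc hd].
rewrite (mx2_eta Y) det_mx2 in dY vY.
have [W [hW [[c [hc0 e]]|e]]] := nf _ _ _ _ ha hb hc hd dY vY; rewrite -(mx2_eta Y) in e;
  have := inV_GL W hyY hW; rewrite -!mulmxA e => h1.
- exists (M *m Lmx c); split; first by rewrite unitmx_mul hM L_unit.
  move=> [|[|m]] // _; rewrite Lmx0 mul1mx.
    by rewrite D0 mulmx1; apply: inV_GL => //; exact: GL2o_L.
  by rewrite -mulmxA; move: h1; rewrite -[mx2 1 0 c w]mul1mx -D0 Dcase1 expr0 mul1r.
- exists (M *m Smx); split.
    by rewrite unitmx_mul hM; apply: GL2o_unit; exact: GL2o_S.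
  move=> [|[|m]] // _; rewrite Lmx0 mul1mx.
    by rewrite D0 mulmx1; apply: inV_GL => //; exact: GL2o_S.
  have := inV_GL Smx h1 GL2o_S.
  suff -> : M *m mx2 w 0 0 1 *m Smx = M *m Smx *m D 1 by [].
  by rewrite -!mulmxA /Smx /D !mx2_mul; congr (_ *m mx2 _ _ _ _); ring.
Qed.


Hypothesis hcomp : forall a : nat -> F,
          (forall n : int, exists N : nat, forall i j, (N <= i)%N -> (N <= j)%N ->
              close F val n (a i) (a j)) ->
          exists l : F, forall n : int, exists N : nat, forall i, (N <= i)%N ->
              close F val n (a i) l.

Definition dv (i : nat) (t : F) := o (t / w ^+ i).

Lemma val_wexp i : val (w ^+ i) = i.
Proof.
elim: i => [|i IH]; first by rewrite expr0 val1.
rewrite exprS hmul ?expf_neq0 // IH hw1. lia.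
Qed.

Lemma dvD i t u : dv i t -> dv i u -> dv i (t + u).
Proof. by rewrite /dv mulrDl; apply: in_oD. Qed.

Lemma dv0 i : dv i 0.
Proof. by rewrite /dv mul0r; exact: in_o0. Qed.

Lemma dv_mono i j t : (i <= j)%N -> dv j t -> dv i t.
Proof.
move=> hij h; rewrite /dv.
have -> : t / w ^+ i = (t / w ^+ j) * w ^+ (j - i).
  rewrite -mulrA; congr (_ * _).
  rewrite -{1}(subnKC hij) exprD invfM -mulrA mulVf ?expf_neq0 // mulr1 //.
exact: in_oM _ _ h (in_o_exp _).
Qed.

Lemma dv_mul k c : o c -> dv k (w ^+ k * c).
Proof. by move=> hc; rewrite /dv mulrC mulrA mulVf ?expf_neq0 // mul1r. Qed.

Lemma dv_val i t : dv i t -> (t == 0) || (i%:Z <= val t).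
Proof.
rewrite /dv; case: (eqVneq t 0) => //= tn0.
rewrite in_oE ?mulf_neq0 ?invr_eq0 ?expf_neq0 // hmul ?invr_eq0 ?expf_neq0 // valV ?expf_neq0 //.
rewrite val_wexp. lia.
Qed.

Lemma val_dv i t : (t == 0) || (i%:Z <= val t) -> dv i t.
Proof.
rewrite /dv; case: (eqVneq t 0) => [->|tn0] /=; first by rewrite mul0r /in_o eqxx.
move=> h; apply: in_o_div; first by rewrite expf_neq0.
by rewrite val_wexp h orbT.
Qed.

Lemma dvN i t : dv i t -> dv i (- t).
Proof. by rewrite /dv mulNr; apply: in_oN. Qed.


Lemma step' n s R : exists c, R \in unitmx -> (1 <= n)%N -> Hs n s R ->
  o c /\ Hs n.+1 (s + w ^+ n * c) R.
Proof.
case: (classic (R \in unitmx /\ (1 <= n)%N /\ Hs n s R)) => [[h1 [h2 h3]]|hn].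
  by have [c hc] := step _ _ _ h1 h2 h3; exists c.
by exists 0 => h1 h2 h3; exfalso; apply: hn.
Qed.

Fixpoint seqf (g : nat -> F -> F) (n : nat) : F :=
  match n with 0 => 0 | k.+1 => match k with 0 => 0 | _ => seqf g k + w ^+ k * g k (seqf g k) end end.

Lemma seqfS g k : (1 <= k)%N -> seqf g k.+1 = seqf g k + w ^+ k * g k (seqf g k).
Proof. by case: k. Qed.

Lemma close_of_dv (n : int) (i : nat) t u : n <= i%:Z -> dv i (u - t) -> close F val n t u.
Proof.
move=> hn /dv_val; rewrite /close; case: (eqVneq (u - t) 0) => [e|ne] /=.
  by move=> _; rewrite (subr0_eq e) eqxx.
move=> h; apply/orP; right.
have -> : t - u = - (u - t) by rewrite opprB.
rewrite valN //; exact: le_trans hn h.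
Qed.

Lemma dv_of_close (i : nat) t u : close F val i t u -> dv i (u - t).
Proof.
rewrite /close; case/orP => [/eqP ->|h]; first by rewrite subrr; exact: dv0.
apply: val_dv; case: (eqVneq (u - t) 0) => //= ne.
have -> : u - t = - (t - u) by rewrite opprB.
rewrite valN //; apply: contraNneq ne => e.
by rewrite -opprB e oppr0.
Qed.


Lemma close_sym n t u : close F val n t u -> close F val n u t.
Proof.
rewrite /close; case: (eqVneq t u) => [->|ne] /=; first by [].
have ne' : t - u != 0 by rewrite subr_eq0.
have -> : u - t = -(t - u) by rewrite opprB.
by rewrite (valN _ ne').
Qed.

Lemma ray : exists P, P \in unitmx /\ forall m : nat, inV (x m) (P *m D m).
Proof.
have [R [hR hb]] := base.
pose g n s := proj1_sig (constructive_indefinite_description _ (step' n s R)).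
have hg n s : R \in unitmx -> (1 <= n)%N -> Hs n s R ->
    o (g n s) /\ Hs n.+1 (s + w ^+ n * g n s) R.
  exact: (proj2_sig (constructive_indefinite_description _ (step' n s R))).
pose sq := seqf g.
have inv n : (1 <= n)%N -> Hs n (sq n) R /\ o (g n (sq n)).
  elim: n => [//|n IH] _; case: n IH => [_|n IH].
    have H1 : Hs 1 (sq 1) R by exact: hb.
    by split => //; exact: (hg 1%N _ hR isT H1).1.
  have [H1 _] := IH isT; have [hgo H2] := hg n.+1 _ hR isT H1.
  have H2' : Hs n.+2 (sq n.+2) R by exact: H2.
  by split => //; exact: (hg n.+2 _ hR isT H2').1.
have cau i j : (i <= j)%N -> dv i (sq j - sq i).
  elim: j => [|j IH]; first by rewrite leqn0 => /eqP ->; rewrite subrr; exact: dv0.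
  rewrite leq_eqVlt => /orP [/eqP ->|]; first by rewrite subrr; exact: dv0.
  rewrite ltnS => hij.
  have -> : sq j.+1 - sq i = (sq j - sq i) + (sq j.+1 - sq j) by ring.
  apply: dvD; first exact: IH.
  case: j hij {IH} => [|j] hij; first by rewrite subrr; exact: dv0.
  have -> : sq j.+2 - sq j.+1 = w ^+ j.+1 * g j.+1 (sq j.+1).
    by rewrite /sq seqfS //; ring.
  apply: dv_mono hij _; apply: dv_mul; exact: (inv j.+1 isT).2.
have hcau : forall n : int, exists N : nat, forall i j, (N <= i)%N -> (N <= j)%N ->
    close F val n (sq i) (sq j).
  move=> n; exists (absz n) => i j hi hj.
  have hn k : (absz n <= k)%N -> n <= k%:Z.
    move=> hk; apply: le_trans (lez_abs n) _; rewrite lez_nat //.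
  case: (leqP i j) => hij.
    exact: close_of_dv _ _ _ _ (hn _ hi) (cau _ _ hij).
  apply: close_sym; exact: close_of_dv _ _ _ _ (hn _ hj) (cau _ _ (ltnW hij)).
have [l hl] := hcomp sq hcau.
have hdl m : dv m (l - sq m).
  have [N hN] := hl m.
  have c1 := hN (maxn N m) (leq_maxl _ _).
  have d1 := dv_of_close _ _ _ c1.
  have d2 := cau m (maxn N m) (leq_maxr _ _).
  have -> : l - sq m = (l - sq (maxn N m)) + (sq (maxn N m) - sq m) by ring.
  exact: dvD.
exists (R *m Lmx l); split; first by rewrite unitmx_mul hR L_unit.
move=> m.
have [H _] := inv (maxn m 1) (leq_maxr _ _).
have h := H m (leq_maxl _ _).
have d : dv m (l - sq (maxn m 1)) := dv_mono _ _ _ (leq_maxl _ _) (hdl _).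
have := inV_GL (Lmx ((l - sq (maxn m 1)) / w ^+ m)) h (GL2o_L _ d).
rewrite -!mulmxA LD (mulmxA (Lmx _)) LL.
have -> : sq (maxn m 1) + w ^+ m * ((l - sq (maxn m 1)) / w ^+ m) = l.
  by field; rewrite expf_neq0.
by rewrite mulmxA.
Qed.


Lemma iwasawa K : K \in unitmx -> exists W a b d,
  [/\ GL2o W, a != 0, d != 0 & K *m W = mx2 a b 0 d].
Proof.
move=> hK.
have key : forall W a' b' d', GL2o W -> K *m W = mx2 a' b' 0 d' ->
    exists W a b d, [/\ GL2o W, a != 0, d != 0 & K *m W = mx2 a b 0 d].
  move=> W a' b' d' hW e; exists W, a', b', d'.
  have hu : (K *m W) \in unitmx by rewrite unitmx_mul hK (GL2o_unit _ hW).
  rewrite e mx2_unit mulr0 subr0 mulf_eq0 negb_or in hu; case/andP: hu => h1 h2; split => //.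
have E := mx2_eta K.
set a := K 0 0 in E; set b := K 0 1 in E; set c := K 1 0 in E; set d := K 1 1 in E.
case: (boolP ((d != 0) && ((c == 0) || (val d <= val c)))) => [/andP [dn0 hcd]|hcd].
  apply: (key (mx2 1 0 (- (c / d)) 1) (a - b * (c / d)) b d).
    apply: GL2o_mx2; rewrite ?mulr1 ?mul0r ?subr0 ?val1 ?oner_neq0 //; try exact: in_o1; try exact: in_o0.
    by apply: in_oN; apply: in_o_div.
  by rewrite E mx2_mul; congr mx2; field.
have cn0 : c != 0.
  apply/eqP => c0; move: hcd; rewrite c0 eqxx orTb andbT negbK => /eqP d0.
  by move: hK; rewrite E mx2_unit c0 d0 !mulr0 subr0 eqxx.
apply: (key (mx2 (- (d / c)) 1 1 0) (b - a * (d / c)) a c).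
  apply: GL2o_mx2; rewrite ?mulr1 ?mulr0 ?sub0r ?valN1 ?oppr_eq0 ?oner_neq0 //; try exact: in_o1; try exact: in_o0.
  apply: in_oN; apply: in_o_div => //.
  move: hcd; rewrite (negbTE cn0) /=; case: (eqVneq d 0) => //= _ h.
  by rewrite ltW // ltNge.
by rewrite E mx2_mul; congr mx2; field.
Qed.


Lemma upper_end p q r : p != 0 -> r != 0 -> exists a b : nat, forall n : nat,
  exists V, GL2o V /\ mx2 p q 0 r *m D (n + a) = p *: (D (n + b) *m V).
Proof.
move=> hp hr.
set rho := r / p.
have hrho : rho != 0 by rewrite mulf_neq0 ?invr_eq0.
set k := val rho.
set a := (absz k + absz (val p - val q))%N.
have hak : 0 <= a%:Z + k.
  have := lez_abs k; rewrite /a PoszD. have := abszE k. lia.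
set b := absz (a%:Z + k).
have hb : b%:Z = a%:Z + k by rewrite /b gez0_abs.
exists a, b => n.
set t := q * w ^+ (n + a) / p.
set u := rho * w ^+ a / w ^+ b.
have hu0 : u != 0 by rewrite !mulf_neq0 ?invr_eq0 ?expf_neq0.
have hwa : w ^+ a != 0 by rewrite expf_neq0.
have hwb : w ^+ b != 0 by rewrite expf_neq0.
have hvu : val u = 0.
  rewrite /u hmul ?mulf_neq0 ?invr_eq0 // hmul // valV // !val_wexp -/k hb; lia.
have ht : o t.
  rewrite /t; case: (eqVneq q 0) => [->|hq]; first by rewrite !mul0r /in_o eqxx.
  have hwna : w ^+ (n + a) != 0 by rewrite expf_neq0.
  rewrite in_oE; last by rewrite !mulf_neq0 ?invr_eq0.
  rewrite hmul ?mulf_neq0 ?invr_eq0 // hmul // valV // val_wexp PoszD.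
  have := lez_abs (val p - val q); have := abszE (val p - val q); rewrite /a PoszD. lia.
exists (mx2 1 t 0 u); split.
  apply: GL2o_mx2; rewrite ?mulr1 ?mul0r ?mulr0 ?subr0 ?mul1r //; try exact: in_o1; try exact: in_o0.
  by rewrite in_oE // hvu.
rewrite /D !mx2_mul mx2_scale /t /u /rho !exprD; congr mx2; field; rewrite ?hp ?hwa ?hwb //.
Qed.


Lemma assemble e (g : V -> V) : in_Ghat F val w e g ->
  exists k b : V -> V,
    [/\ in_Ghat F val w e k, k (x 0) = x 0,
        in_Ghat F val w e b, fixes_end F val x b
      & forall y, g y = k (b y)].
Proof.
move=> [[[ginv hgK hKg] hgd] hgl].
have [P [hP hxP]] := ray.
set z := ginv (x 0).
have [N [hN hzN]] := v_rep z.
have hK : invmx P *m N \in unitmx by rewrite unitmx_mul unitmx_inv hP hN.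
have [W [al [be [de [hW ha hd eT]]]]] := iwasawa _ hK.
set Ti := mx2 al^-1 (- be / (al * de)) 0 de^-1.
have eTi : mx2 al be 0 de *m Ti = 1%:M.
  by rewrite /Ti mx2_mul mx2_1; congr mx2; field; rewrite ?ha ?hd.
have eTi' : Ti *m mx2 al be 0 de = 1%:M.
  by rewrite /Ti mx2_mul mx2_1; congr mx2; field; rewrite ?ha ?hd.
have hTi : Ti \in unitmx.
  by rewrite /Ti mx2_unit mulr0 subr0 mulf_neq0 ?invr_eq0.
set B := P *m Ti *m invmx P.
have hB : B \in unitmx by rewrite /B !unitmx_mul hP hTi unitmx_inv hP.
have hBi : invmx B \in unitmx by rewrite unitmx_inv.
have hBz : act B z = x 0.
  have h1 := act_inV hB (inV_GL W hzN hW).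
  have e1 : B *m (N *m W) = P *m D 0.
    rewrite D0 mulmx1 /B -!mulmxA (mulmxA (invmx P)) eT.
    by rewrite eTi' mulmx1.
  rewrite e1 in h1; exact: v_eqM h1 (hxP 0%N).
have [a [b hab]] := upper_end _ (- be / (al * de)) _ (invr_neq0 ha) (invr_neq0 hd).
have hfix : fixes_end F val x (act B).
  exists a, b => n.
  have [V0 [hV eV]] := hab n.
  have h1 := act_inV hB (hxP (n + a)%N).
  have e1 : B *m (P *m D (n + a)) = al^-1 *: (P *m (D (n + b) *m V0)).
    rewrite /B -!mulmxA (mulmxA (invmx P)) mulVmx // mul1mx.
    have eV2 : Ti *m D (n + a) = al^-1 *: (D (n + b) *m V0) := eV. by rewrite eV2 -scalemxAr.
  rewrite e1 in h1.
  have h2 := inV_unscale _ (invr_neq0 ha) h1.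
  have [V' [hV' [eV' _]]] := GL2o_inv _ hV.
  have h3 := inV_GL V' h2 hV'.
  rewrite -!mulmxA eV' mulmx1 in h3.
  exact: v_eqM h3 (hxP (n + b)%N).
exists (fun y => g (act (invmx B) y)), (act B); split.
- split; first split.
  + exists (fun y => act B (ginv y)) => y /=.
      by rewrite hgK act_Kinv.
    by rewrite act_invK // hKg.
  + move=> y1 y2 n; exact: (iff_trans (act_dist hBi) (hgd _ _ n)).
  + move=> y1 y2 hadj.
    have [A [hA hAb]] := hgl _ _ (act_adj hBi hadj).
    exists (A *m invmx B); split; first by rewrite unitmx_mul hA hBi.
    move=> y hy.
    have := hAb _ (act_ball _ _ _ _ _ hBi hy).
    move/(pgl_act_eq _ _ _ hA) => ->.
    rewrite (act_mul _ _ _ hA hBi); apply: pgl_act_act; by rewrite unitmx_mul hA hBi.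
- by rewrite /= -hBz act_invK // /z hKg.
- exact: act_Ghat.
- exact: hfix.
- by move=> y /=; rewrite act_invK.
Qed.

End Val.

Theorem mainTheorem9 (F : fieldType) (val : F -> int) (varpi : F)
  (hF : is_nonarch_local_field F val) (hvarpi : varpi != 0 /\ val varpi = 1)
  (e : nat) (he : (1 <= e)%N)
  (x : int -> vertex F val) (hx : biinf_path F val varpi x)
  (g : vertex F val -> vertex F val) (hg : in_Ghat F val varpi e g) :
  exists k b : vertex F val -> vertex F val,
    [/\ in_Ghat F val varpi e k, k (x 0) = x 0,
        in_Ghat F val varpi e b, fixes_end F val x b
      & forall y, g y = k (b y)].
Proof.
case: hF => hmul hult _ hcomp _.
case: hvarpi => hw0 hw1.
exact: (@assemble F val hmul hult varpi hw0 hw1 x hx hcomp e g hg).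
Qed.
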